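(* Let $\sigma:\mathbb{R}\to\mathbb{R}$ be $\sigma(x)=\operatorname{sgn}(x)x^2$. Then every nonzero point of $\mathbb{R}^2$ has a dense orbit in $\mathbb{R}^2$ under the action of $\Gamma(\sigma)$. Moreover, the set $\bigcup_{n=0}^{\infty}\bigcup_{k=0}^{\infty}E_\sigma^{-k}\big(\{E_\sigma^n(1,0)\}\big)$ is a discrete subset of $\mathbb{R}_{\geq 0}^2$.
   Context: For an increasing odd homeomorphism $\sigma:\mathbb{R}\to\mathbb{R}$, define $h_\sigma(x,y)=(x+\sigma^{-1}(y),y)$ and $v_\sigma(x,y)=(x,\sigma(x)+y)$ on $\mathbb{R}^2$, and let $\Gamma(\sigma)$ be the group generated by $h_\sigma,v_\sigma$. The generalized Euclidean algorithm is the map $E_\sigma:\mathbb{R}_{\geq0}^2\to\mathbb{R}_{\geq0}^2$ given by $E_\sigma(x,y)=(x-\sigma^{-1}(y),y)$ if $y<\sigma(x)$ and $E_\sigma(x,y)=(x,y-\sigma(x))$ if $y\geq\sigma(x)$; $E_\sigma^{-k}(S)$ denotes the preimage of $S$ under the $k$-th iterate. *)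

(* Defs.v *)
From Stdlib Require Import Reals.
Open Scope R_scope.

Definition pt := (R * R)%type.

Definition sig2 (x : R) : R := if Rle_dec 0 x then x * x else - (x * x).
Definition sig2_inv (y : R) : R := if Rle_dec 0 y then sqrt y else - sqrt (- y).

Definition h_gen (sigma siginv : R -> R) (p : pt) : pt := (fst p + siginv (snd p), snd p).
Definition h_gen_inv (sigma siginv : R -> R) (p : pt) : pt := (fst p - siginv (snd p), snd p).
Definition v_gen (sigma siginv : R -> R) (p : pt) : pt := (fst p, sigma (fst p) + snd p).
Definition v_gen_inv (sigma siginv : R -> R) (p : pt) : pt := (fst p, snd p - sigma (fst p)).

Inductive Gamma (sigma siginv : R -> R) : (pt -> pt) -> Prop :=
| Gamma_id : Gamma sigma siginv (fun p => p)
| Gamma_h : forall g, Gamma sigma siginv g ->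
    Gamma sigma siginv (fun p => h_gen sigma siginv (g p))
| Gamma_hinv : forall g, Gamma sigma siginv g ->
    Gamma sigma siginv (fun p => h_gen_inv sigma siginv (g p))
| Gamma_v : forall g, Gamma sigma siginv g ->
    Gamma sigma siginv (fun p => v_gen sigma siginv (g p))
| Gamma_vinv : forall g, Gamma sigma siginv g ->
    Gamma sigma siginv (fun p => v_gen_inv sigma siginv (g p)).

Definition orbit (sigma siginv : R -> R) (p : pt) : pt -> Prop :=
  fun q => exists g, Gamma sigma siginv g /\ q = g p.

Definition dist2 (p q : pt) : R :=
  sqrt ((fst p - fst q) ^ 2 + (snd p - snd q) ^ 2).

Definition dense2 (S : pt -> Prop) : Prop :=
  forall (q : pt) (eps : R), 0 < eps -> exists s, S s /\ dist2 s q < eps.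

Definition discrete2 (S : pt -> Prop) : Prop :=
  forall p, S p -> exists eps, 0 < eps /\ forall q, S q -> dist2 p q < eps -> q = p.

Definition nonneg_quadrant (p : pt) : Prop := 0 <= fst p /\ 0 <= snd p.

Definition Euclid (sigma siginv : R -> R) (p : pt) : pt :=
  if Rlt_dec (snd p) (sigma (fst p)) then (fst p - siginv (snd p), snd p)
  else (fst p, snd p - sigma (fst p)).

Definition backward_set (sigma siginv : R -> R) : pt -> Prop :=
  fun p => exists n k : nat, nonneg_quadrant p /\
    Nat.iter k (Euclid sigma siginv) p = Nat.iter n (Euclid sigma siginv) (1, 0).

(* Main.v *)
Require Import Defs.
From Stdlib Require Import Reals Lra Lia Psatz ZArith List Classical.
Open Scope R_scope.

Lemma sig2_abs x : sig2 x = x * Rabs x.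
Proof. unfold sig2; destruct (Rle_dec 0 x).
 - rewrite Rabs_right; lra.
 - rewrite Rabs_left; lra. Qed.

Lemma sig2_inv_pos y : 0 <= y -> sig2_inv y = sqrt y.
Proof. unfold sig2_inv; destruct (Rle_dec 0 y); lra. Qed.
Lemma sig2_inv_neg y : y < 0 -> sig2_inv y = - sqrt (- y).
Proof. unfold sig2_inv; destruct (Rle_dec 0 y); lra. Qed.

Lemma sig2_inv_alt y : sig2_inv y = sqrt y - sqrt (- y).
Proof. destruct (Rle_dec 0 y).
 - rewrite sig2_inv_pos by lra. destruct (Req_dec y 0). subst. rewrite Ropp_0, sqrt_0; ring.
   rewrite (sqrt_neg_0 (-y)) by lra; ring.
 - rewrite sig2_inv_neg by lra. rewrite (sqrt_neg_0 y) by lra; ring. Qed.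

Lemma sig2_sig2_inv y : sig2 (sig2_inv y) = y.
Proof. rewrite sig2_abs. destruct (Rle_dec 0 y).
 - rewrite sig2_inv_pos by lra. rewrite Rabs_right by (apply Rle_ge, sqrt_pos). apply sqrt_sqrt; lra.
 - rewrite sig2_inv_neg by lra. rewrite Rabs_Ropp, Rabs_right by (apply Rle_ge, sqrt_pos).
   pose proof (sqrt_sqrt (-y)). lra. Qed.

Lemma sig2_inv_sig2 x : sig2_inv (sig2 x) = x.
Proof. unfold sig2; destruct (Rle_dec 0 x).
 - rewrite sig2_inv_pos by nra. apply sqrt_square; lra.
 - destruct (Req_dec x 0); [subst; lra|].
   rewrite sig2_inv_neg by nra. replace (- - (x*x)) with ((-x)*(-x)) by ring.
   rewrite sqrt_square; lra. Qed.

Lemma sig2_mul a b : sig2 (a * b) = sig2 a * sig2 b.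
Proof. rewrite !sig2_abs, Rabs_mult; ring. Qed.

Lemma sig2_inv_mul a b : sig2_inv (a * b) = sig2_inv a * sig2_inv b.
Proof. rewrite <- (sig2_sig2_inv a) at 1. rewrite <- (sig2_sig2_inv b) at 1.
 rewrite <- sig2_mul. apply sig2_inv_sig2. Qed.

Lemma sig2_1 : sig2 1 = 1.
Proof. rewrite sig2_abs, Rabs_R1; ring. Qed.
Lemma sig2_inv_0 : sig2_inv 0 = 0.
Proof. rewrite sig2_inv_pos by lra. apply sqrt_0. Qed.
Lemma sig2_0 : sig2 0 = 0.
Proof. rewrite sig2_abs; ring. Qed.
Lemma sig2_inv_1 : sig2_inv 1 = 1.
Proof. rewrite sig2_inv_pos by lra. apply sqrt_1. Qed.

Lemma sig2_abs_sq x : Rabs (sig2 x) = x * x.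
Proof. rewrite sig2_abs, Rabs_mult, Rabs_Rabsolu. rewrite <- Rabs_mult.
 apply Rabs_right. nra. Qed.

Lemma sig2_zero x : sig2 x = 0 -> x = 0.
Proof. intro H. pose proof (sig2_abs_sq x). rewrite H, Rabs_R0 in H0. nra. Qed.

Lemma sig2_inv_zero y : sig2_inv y = 0 -> y = 0.
Proof. intro H. rewrite <- (sig2_sig2_inv y), H. apply sig2_0. Qed.

Lemma sig2_inv_abs y : sig2_inv y * sig2_inv y = Rabs y.
Proof. rewrite <- (sig2_sig2_inv y) at 3. rewrite sig2_abs_sq. reflexivity. Qed.
Notation G := (Gamma sig2 sig2_inv).
Notation orb := (orbit sig2 sig2_inv).

Lemma Gamma_comp f g : G f -> G g -> G (fun p => f (g p)).
Proof. intros Hf Hg. induction Hf.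
 - exact Hg.
 - apply Gamma_h; assumption.
 - apply Gamma_hinv; assumption.
 - apply Gamma_v; assumption.
 - apply Gamma_vinv; assumption. Qed.

Lemma orb_refl p : orb p p.
Proof. exists (fun p => p). split; [constructor|reflexivity]. Qed.

Lemma orb_trans p q r : orb p q -> orb q r -> orb p r.
Proof. intros [g [Hg ->]] [f [Hf ->]]. exists (fun x => f (g x)). split; [apply Gamma_comp; auto|reflexivity]. Qed.

Lemma orb_G p q g : orb p q -> G g -> orb p (g q).
Proof. intros H Hg. apply orb_trans with q; auto. exists g; auto. Qed.

Lemma orb_h p q : orb p q -> orb p (fst q + sig2_inv (snd q), snd q).
Proof. intro H. apply (orb_G _ _ (h_gen sig2 sig2_inv) H). apply (Gamma_h _ _ (fun p => p)); constructor. Qed.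
Lemma orb_hinv p q : orb p q -> orb p (fst q - sig2_inv (snd q), snd q).
Proof. intro H. apply (orb_G _ _ (h_gen_inv sig2 sig2_inv) H). apply (Gamma_hinv _ _ (fun p => p)); constructor. Qed.
Lemma orb_v p q : orb p q -> orb p (fst q, sig2 (fst q) + snd q).
Proof. intro H. apply (orb_G _ _ (v_gen sig2 sig2_inv) H). apply (Gamma_v _ _ (fun p => p)); constructor. Qed.
Lemma orb_vinv p q : orb p q -> orb p (fst q, snd q - sig2 (fst q)).
Proof. intro H. apply (orb_G _ _ (v_gen_inv sig2 sig2_inv) H). apply (Gamma_vinv _ _ (fun p => p)); constructor. Qed.

Lemma orb_eq p q q' : orb p q -> q = q' -> orb p q'.
Proof. intros H ->; exact H. Qed.

Lemma orb_hpowN p q n : orb p q ->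
  orb p (fst q + INR n * sig2_inv (snd q), snd q) /\ orb p (fst q - INR n * sig2_inv (snd q), snd q).
Proof. intro H. induction n as [|n [IH1 IH2]].
 - simpl. split; apply (orb_eq _ _ _ H); destruct q; simpl; f_equal; ring.
 - split.
   + apply (orb_eq _ _ _ (orb_h _ _ IH1)). rewrite S_INR; simpl; f_equal; ring.
   + apply (orb_eq _ _ _ (orb_hinv _ _ IH2)). rewrite S_INR; simpl; f_equal; ring. Qed.

Lemma orb_vpowN p q n : orb p q ->
  orb p (fst q, snd q + INR n * sig2 (fst q)) /\ orb p (fst q, snd q - INR n * sig2 (fst q)).
Proof. intro H. induction n as [|n [IH1 IH2]].
 - simpl. split; apply (orb_eq _ _ _ H); destruct q; simpl; f_equal; ring.
 - split.
   + apply (orb_eq _ _ _ (orb_v _ _ IH1)). rewrite S_INR; simpl; f_equal; ring.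
   + apply (orb_eq _ _ _ (orb_vinv _ _ IH2)). rewrite S_INR; simpl; f_equal; ring. Qed.

Lemma IZR_cases (m : Z) : exists n : nat, IZR m = INR n \/ IZR m = - INR n.
Proof. destruct m.
 - exists 0%nat; left; reflexivity.
 - exists (Pos.to_nat p); left. rewrite INR_IZR_INZ, positive_nat_Z; reflexivity.
 - exists (Pos.to_nat p); right. rewrite INR_IZR_INZ, positive_nat_Z, <- opp_IZR; reflexivity. Qed.

Lemma orb_hpow p q (m : Z) : orb p q -> orb p (fst q + IZR m * sig2_inv (snd q), snd q).
Proof. intro H. destruct (IZR_cases m) as [n [E|E]]; rewrite E;
 destruct (orb_hpowN p q n H) as [H1 H2]; auto.
 apply (orb_eq _ _ _ H2); f_equal; ring. Qed.

Lemma orb_vpow p q (m : Z) : orb p q -> orb p (fst q, snd q + IZR m * sig2 (fst q)).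
Proof. intro H. destruct (IZR_cases m) as [n [E|E]]; rewrite E;
 destruct (orb_vpowN p q n H) as [H1 H2]; auto.
 apply (orb_eq _ _ _ H2); f_equal; ring. Qed.

Definition Msc (l : R) (p : pt) : pt := (l * fst p, sig2 l * snd p).

Lemma Gamma_Msc g : G g -> forall l p, g (Msc l p) = Msc l (g p).
Proof. intros Hg l. induction Hg; intro p; simpl; try reflexivity;
 rewrite IHHg; unfold Msc, h_gen, h_gen_inv, v_gen, v_gen_inv; simpl; f_equal;
 rewrite ?sig2_inv_mul, ?sig2_inv_sig2, ?sig2_mul; ring. Qed.

Lemma orb_Msc l p q : orb p q -> orb (Msc l p) (Msc l q).
Proof. intros [g [Hg ->]]. exists g. split; auto. symmetry; apply Gamma_Msc; auto. Qed.
Definition ctsR (f : R -> R) := forall x eps, 0 < eps -> exists eta, 0 < eta /\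
  forall y, Rabs (y - x) < eta -> Rabs (f y - f x) < eps.
Definition cts (f : pt -> pt) := forall q eps, 0 < eps -> exists eta, 0 < eta /\
  forall q', Rabs (fst q' - fst q) < eta -> Rabs (snd q' - snd q) < eta ->
   Rabs (fst (f q') - fst (f q)) < eps /\ Rabs (snd (f q') - snd (f q)) < eps.

Lemma le_sqrt_of_sq x c : 0 <= x -> x * x <= c -> x <= sqrt c.
Proof. intros H1 H2. rewrite <- (sqrt_square x) by lra. apply sqrt_le_1_alt; lra. Qed.

Lemma sqrt_holder a b : Rabs (sqrt a - sqrt b) <= sqrt (Rabs (a - b)).
Proof.
 assert (K: forall a b, b <= a -> Rabs (sqrt a - sqrt b) <= sqrt (a - b)).
 { clear a b. intros a b Hab. destruct (Rle_dec 0 b).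
   - pose proof (sqrt_le_1_alt _ _ Hab). rewrite Rabs_right by lra.
     apply le_sqrt_of_sq; [lra|]. pose proof (sqrt_sqrt a) as Ha. pose proof (sqrt_sqrt b) as Hb.
     pose proof (sqrt_pos b). nra.
   - rewrite (sqrt_neg_0 b) by lra. rewrite Rminus_0_r, Rabs_right by (apply Rle_ge, sqrt_pos).
     apply sqrt_le_1_alt; lra. }
 destruct (Rle_dec b a).
 - rewrite (Rabs_right (a-b)) by lra. apply K; lra.
 - rewrite Rabs_minus_sym, (Rabs_minus_sym a b), (Rabs_right (b-a)) by lra. apply K; lra. Qed.

Lemma sqrt_lt_of x e : 0 < e -> x < e * e -> sqrt x < e.
Proof. intros He Hx. destruct (Rle_dec 0 x).
 - rewrite <- (sqrt_square e) by lra. apply sqrt_lt_1_alt; lra.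
 - rewrite sqrt_neg_0; lra. Qed.

Lemma ctsR_sig2_inv : ctsR sig2_inv.
Proof. intros x eps He. exists ((eps/2)*(eps/2)). split; [nra|]. intros y Hy.
 rewrite !sig2_inv_alt.
 pose proof (sqrt_holder y x). pose proof (sqrt_holder (-y) (-x)).
 replace (-y - - x) with (-(y-x)) in H0 by ring. rewrite Rabs_Ropp in H0.
 pose proof (sqrt_lt_of (Rabs (y - x)) (eps/2) ltac:(lra) Hy).
 replace (sqrt y - sqrt (- y) - (sqrt x - sqrt (- x))) with ((sqrt y - sqrt x) - (sqrt (-y) - sqrt (-x))) by ring.
 eapply Rle_lt_trans; [apply Rabs_triang|]. rewrite Rabs_Ropp. lra. Qed.

Lemma ctsR_sig2 : ctsR sig2.
Proof. intros x eps He.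
 assert (C: continuity_pt (fun x => x * Rabs x) x).
 { apply (continuity_pt_mult (fun x => x) Rabs). apply derivable_continuous_pt, derivable_pt_id. apply Rcontinuity_abs. }
 destruct (C eps He) as [a [Ha Hc]]. exists a; split; auto. intros y Hy.
 rewrite !sig2_abs. destruct (Req_dec y x). subst. unfold Rminus. rewrite Rplus_opp_r, Rabs_R0; lra.
 apply (Hc y). split. split. exact I. auto. exact Hy. Qed.

Lemma cts_comp f g : cts f -> cts g -> cts (fun p => f (g p)).
Proof. intros Hf Hg q eps He. destruct (Hf (g q) eps He) as [e1 [He1 H1]].
 destruct (Hg q e1 He1) as [e2 [He2 H2]]. exists e2; split; auto.
 intros q' A B. destruct (H2 q' A B). apply H1; auto. Qed.

Lemma cts_id : cts (fun p => p).
Proof. intros q eps He. exists eps; split; auto. Qed.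

Lemma cts_h : cts (h_gen sig2 sig2_inv).
Proof. intros q eps He. destruct (ctsR_sig2_inv (snd q) (eps/2) ltac:(lra)) as [a [Ha Hc]].
 exists (Rmin a (eps/2)). split. apply Rmin_glb_lt; lra.
 intros q' A B. pose proof (Rmin_l a (eps/2)). pose proof (Rmin_r a (eps/2)).
 unfold h_gen; simpl. split; [|lra].
 replace (fst q' + sig2_inv (snd q') - (fst q + sig2_inv (snd q))) with ((fst q' - fst q) + (sig2_inv (snd q') - sig2_inv (snd q))) by ring.
 eapply Rle_lt_trans; [apply Rabs_triang|]. pose proof (Hc (snd q') ltac:(lra)). lra. Qed.

Lemma cts_hinv : cts (h_gen_inv sig2 sig2_inv).
Proof. intros q eps He. destruct (ctsR_sig2_inv (snd q) (eps/2) ltac:(lra)) as [a [Ha Hc]].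
 exists (Rmin a (eps/2)). split. apply Rmin_glb_lt; lra.
 intros q' A B. pose proof (Rmin_l a (eps/2)). pose proof (Rmin_r a (eps/2)).
 unfold h_gen_inv; simpl. split; [|lra].
 replace (fst q' - sig2_inv (snd q') - (fst q - sig2_inv (snd q))) with ((fst q' - fst q) - (sig2_inv (snd q') - sig2_inv (snd q))) by ring.
 eapply Rle_lt_trans; [apply Rabs_triang|]. rewrite Rabs_Ropp. pose proof (Hc (snd q') ltac:(lra)). lra. Qed.

Lemma cts_v : cts (v_gen sig2 sig2_inv).
Proof. intros q eps He. destruct (ctsR_sig2 (fst q) (eps/2) ltac:(lra)) as [a [Ha Hc]].
 exists (Rmin a (eps/2)). split. apply Rmin_glb_lt; lra.
 intros q' A B. pose proof (Rmin_l a (eps/2)). pose proof (Rmin_r a (eps/2)).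
 unfold v_gen; simpl. split; [lra|].
 replace (sig2 (fst q') + snd q' - (sig2 (fst q) + snd q)) with ((sig2 (fst q') - sig2 (fst q)) + (snd q' - snd q)) by ring.
 eapply Rle_lt_trans; [apply Rabs_triang|]. pose proof (Hc (fst q') ltac:(lra)). lra. Qed.

Lemma cts_vinv : cts (v_gen_inv sig2 sig2_inv).
Proof. intros q eps He. destruct (ctsR_sig2 (fst q) (eps/2) ltac:(lra)) as [a [Ha Hc]].
 exists (Rmin a (eps/2)). split. apply Rmin_glb_lt; lra.
 intros q' A B. pose proof (Rmin_l a (eps/2)). pose proof (Rmin_r a (eps/2)).
 unfold v_gen_inv; simpl. split; [lra|].
 replace (snd q' - sig2 (fst q') - (snd q - sig2 (fst q))) with ((snd q' - snd q) - (sig2 (fst q') - sig2 (fst q))) by ring.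
 eapply Rle_lt_trans; [apply Rabs_triang|]. rewrite Rabs_Ropp. pose proof (Hc (fst q') ltac:(lra)). lra. Qed.

Lemma cts_Gamma g : G g -> cts g.
Proof. intro H. induction H.
 - apply cts_id.
 - apply (cts_comp (h_gen sig2 sig2_inv) g cts_h IHGamma).
 - apply (cts_comp (h_gen_inv sig2 sig2_inv) g cts_hinv IHGamma).
 - apply (cts_comp (v_gen sig2 sig2_inv) g cts_v IHGamma).
 - apply (cts_comp (v_gen_inv sig2 sig2_inv) g cts_vinv IHGamma). Qed.

Lemma choose_j a d : 0 < d -> exists j : Z, 0 < a - IZR j * d <= d.
Proof. intro Hd. destruct (archimed (-(a/d))) as [H1 H2]. exists (- up (-(a/d)))%Z.
 rewrite opp_IZR. set (u := IZR (up (-(a/d)))) in *.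
 replace (a - - u * d) with ((a/d + u) * d) by (field; lra). split.
 - apply Rmult_lt_0_compat; lra.
 - assert (0 <= (1 - (a/d+u)) * d) by (apply Rmult_le_pos; lra). lra. Qed.

Lemma net a s t : s <> 0 -> exists m : Z, Rabs (a + IZR m * s - t) <= Rabs s.
Proof. intro Hs. assert (Ha: 0 < Rabs s) by (apply Rabs_pos_lt; auto).
 destruct (choose_j (t - a) (Rabs s) Ha) as [j Hj].
 destruct (Rle_dec 0 s).
 - exists j. rewrite (Rabs_right s) in * by lra. apply Rabs_le; lra.
 - exists (- j)%Z. rewrite opp_IZR. rewrite (Rabs_left s) in * by lra. apply Rabs_le; lra. Qed.

Lemma round_near x s : s <> 0 -> exists k : Z, Rabs (x - IZR k * s) <= Rabs s / 2.
Proof. intro Hs. assert (Ha: 0 < Rabs s) by (apply Rabs_pos_lt; auto).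
 destruct (choose_j (x + Rabs s / 2) (Rabs s) Ha) as [j Hj].
 destruct (Rle_dec 0 s).
 - exists j. rewrite (Rabs_right s) in * by lra. apply Rabs_le; lra.
 - exists (- j)%Z. rewrite opp_IZR. rewrite (Rabs_left s) in * by lra. apply Rabs_le; lra. Qed.

Lemma sig2_pos x : 0 <= x -> sig2 x = x * x.
Proof. intro; rewrite sig2_abs, Rabs_right; lra. Qed.
Lemma sig2_neg x : x <= 0 -> sig2 x = - (x * x).
Proof. intro; rewrite sig2_abs, Rabs_left1; lra. Qed.

Lemma small10 d : 0 < d -> exists q, orb (1,0) q /\ 0 < snd q < d.
Proof. intro Hd.
 destruct (archimed (1/d)) as [A1 A2].
 set (k := (up (1/d) + 1)%Z). set (K := IZR k).
 assert (HK : K = IZR (up (1/d)) + 1) by (unfold K, k; rewrite plus_IZR; auto).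
 assert (Hdiv: 0 < 1/d) by (apply Rdiv_lt_0_compat; lra).
 assert (HK1: 1 < K) by lra.
 assert (HKd: 1 < K * d). { assert (1/d * d = 1) by (field; lra). nra. }
 assert (H1: orb (1,0) (1,1)).
 { apply (orb_eq _ _ _ (orb_v _ _ (orb_refl (1,0)))). simpl; rewrite sig2_1; f_equal; ring. }
 assert (H2: orb (1,0) (K,1)).
 { apply (orb_eq _ _ _ (orb_hpow _ _ (k-1) H1)). simpl. rewrite sig2_inv_1, minus_IZR. fold K. f_equal; ring. }
 assert (H3: orb (1,0) (K, K*K+1)).
 { apply (orb_eq _ _ _ (orb_v _ _ H2)). simpl. rewrite sig2_pos by lra. f_equal; ring. }
 set (S := sqrt (K*K+1)).
 assert (HS: S * S = K*K+1) by (apply sqrt_sqrt; nra).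
 assert (HS0: 0 <= S) by apply sqrt_pos.
 set (e := S - K).
 assert (H4: orb (1,0) (-e, K*K+1)).
 { apply (orb_eq _ _ _ (orb_hinv _ _ H3)). simpl. rewrite sig2_inv_pos by nra. fold S. unfold e. f_equal; ring. }
 assert (He: 0 < e) by (unfold e; nra).
 assert (He2: e * (S + K) = 1) by (unfold e; nra).
 assert (Hee: e * e < d) by nra.
 assert (He0: 0 < e * e) by nra.
 destruct (choose_j ((K*K+1)/(e*e)) 1 ltac:(lra)) as [j Hj].
 exists (-e, K*K+1 - IZR j * (e*e)). split.
 - apply (orb_eq _ _ _ (orb_vpow _ _ j H4)). simpl. rewrite sig2_neg by lra. f_equal; ring.
 - simpl. assert (E: K*K+1 = (K*K+1)/(e*e) * (e*e)) by (field; lra).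
   set (r := (K*K+1)/(e*e)) in *. split; nra. Qed.

Lemma orb_start p p' q : orb p q -> p = p' -> orb p' q.
Proof. intros H ->; exact H. Qed.

Lemma small_axis x0 d : x0 <> 0 -> 0 < d -> exists q, orb (x0,0) q /\ 0 < Rabs (snd q) < d.
Proof. intros Hx Hd. assert (Hxx: 0 < x0 * x0) by nra.
 destruct (small10 (d / (x0*x0)) ltac:(apply Rdiv_lt_0_compat; lra)) as [q [Hq [Q1 Q2]]].
 exists (Msc x0 q). split.
 - apply (orb_start _ _ _ (orb_Msc x0 _ _ Hq)). unfold Msc; simpl. f_equal; ring.
 - unfold Msc; simpl. rewrite Rabs_mult, sig2_abs_sq, Rabs_right by lra. split. nra.
   assert (d / (x0*x0) * (x0*x0) = d) by (field; lra). nra. Qed.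

Lemma pow4_ge n : INR n <= 4 ^ n.
Proof. induction n. simpl; lra. rewrite S_INR. simpl. pose proof (pow_R1_Rle 4 n ltac:(lra)). lra. Qed.

Lemma small_all p d : p <> (0,0) -> 0 < d -> exists q, orb p q /\ 0 < Rabs (snd q) < d.
Proof. intros Hp Hd.
 assert (Hax: forall p, snd p = 0 -> fst p <> 0 -> exists q, orb p q /\ 0 < Rabs (snd q) < d).
 { intros [x y] Hy Hx. simpl in *. subst. apply small_axis; auto. }
 assert (Ind: forall N p, snd p <> 0 -> Rabs (snd p) < d * 4 ^ N -> exists q, orb p q /\ 0 < Rabs (snd q) < d).
 { induction N as [|N IH]; intros [x y] Hy Hlt; simpl in *.
   - exists (x,y). split. apply orb_refl. simpl. split. apply Rabs_pos_lt; auto. lra.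
   - set (s := sig2_inv y).
     assert (Hs: s <> 0) by (intro E; apply Hy, sig2_inv_zero; auto).
     assert (Hss: s * s = Rabs y) by apply sig2_inv_abs.
     destruct (round_near x s Hs) as [k Hk].
     set (x0 := x - IZR k * s).
     assert (P1: orb (x,y) (x0, y)).
     { apply (orb_eq _ _ _ (orb_hpow _ _ (-k) (orb_refl (x,y)))). simpl. rewrite opp_IZR. unfold x0, s. f_equal; ring. }
     destruct (Req_dec x0 0) as [Z0|Z0].
     + assert (P2: orb (x,y) (s, 0)).
       { apply (orb_eq _ _ _ (orb_vinv _ _ (orb_h _ _ P1))). simpl. rewrite Z0, Rplus_0_l. unfold s. rewrite sig2_sig2_inv. f_equal; ring. }
       destruct (Hax (s,0) eq_refl Hs) as [q [Hq1 Hq2]]. exists q. split; auto. apply orb_trans with (s,0); auto.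
     + set (dd := sig2 x0).
       assert (Hdd: Rabs dd = x0 * x0) by apply sig2_abs_sq.
       assert (Hd0: 0 < Rabs dd) by nra.
       destruct (choose_j (y/dd) 1 ltac:(lra)) as [j Hj].
       assert (P2: orb (x,y) (x0, y - IZR j * dd)).
       { apply (orb_eq _ _ _ (orb_vpow _ _ (-j) P1)). simpl. rewrite opp_IZR. fold dd. f_equal; ring. }
       assert (Hdd0: dd <> 0) by (intro E; rewrite E, Rabs_R0 in Hd0; lra).
       assert (E: y - IZR j * dd = dd * (y/dd - IZR j)) by (field; auto).
       assert (Hy': 0 < Rabs (y - IZR j * dd) <= x0 * x0).
       { rewrite E, Rabs_mult, (Rabs_right (y/dd - IZR j)) by lra. nra. }
       assert (Hx0: Rabs x0 <= Rabs s / 2) by exact Hk.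
       assert (Hx0sq: x0 * x0 <= Rabs y / 4).
       { rewrite <- Hss. assert (x0*x0 = Rabs x0 * Rabs x0) by (rewrite <- Rabs_mult; symmetry; apply Rabs_right; nra).
         assert (s*s = Rabs s * Rabs s) by (rewrite <- Rabs_mult; symmetry; apply Rabs_right; nra).
         pose proof (Rabs_pos x0). nra. }
       destruct (IH (x0, y - IZR j * dd)) as [q [Hq1 Hq2]]; simpl.
       * intro E0. rewrite E0, Rabs_R0 in Hy'. lra.
       * pose proof (pow_lt 4 N ltac:(lra)). lra.
       * exists q; split; auto. apply orb_trans with (x0, y - IZR j * dd); auto. }
 destruct (Req_dec (snd p) 0) as [Hy|Hy].
 - apply Hax; auto. intro Hx. apply Hp. destruct p; simpl in *; subst; auto.
 - destruct (INR_unbounded (Rabs (snd p) / d)) as [N HN].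
   apply (Ind N p Hy). pose proof (pow4_ge N).
   assert (Rabs (snd p) / d * d = Rabs (snd p)) by (field; lra). nra. Qed.
Definition gq (q : nat) : R := (INR q - 1) / sqrt (2 * INR q - 1).

Lemma orb_family (q : nat) (m i : Z) : (1 <= q)%nat ->
  orb (1,0) (1 - INR q + IZR m * sqrt (2 * INR q - 1),
             2 * INR q - 1 + IZR i * sig2 (1 - INR q + IZR m * sqrt (2 * INR q - 1))).
Proof. intro Hq. assert (HQ: 1 <= INR q) by (apply (le_INR 1); auto).
 set (Q := INR q) in *.
 assert (H1: orb (1,0) (1, Q*Q)).
 { apply (orb_eq _ _ _ (orb_vpow _ _ (Z.of_nat (q*q)) (orb_refl (1,0)))). simpl.
   rewrite <- INR_IZR_INZ, mult_INR, sig2_1. fold Q. f_equal; ring. }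
 assert (H2: orb (1,0) (1 - Q, Q*Q)).
 { apply (orb_eq _ _ _ (orb_hinv _ _ H1)). simpl. rewrite sig2_inv_pos by nra. rewrite sqrt_square by lra. reflexivity. }
 assert (H3: orb (1,0) (1 - Q, 2*Q - 1)).
 { apply (orb_eq _ _ _ (orb_v _ _ H2)). simpl. rewrite sig2_neg by lra. f_equal; ring. }
 assert (H4: orb (1,0) (1 - Q + IZR m * sqrt (2*Q-1), 2*Q - 1)).
 { apply (orb_eq _ _ _ (orb_hpow _ _ m H3)). simpl. rewrite sig2_inv_pos by lra. reflexivity. }
 apply (orb_eq _ _ _ (orb_vpow _ _ i H4)). reflexivity. Qed.

Lemma gq_incr (q : nat) : (1 <= q)%nat -> gq (S q) - gq q <= 1 / sqrt (2 * INR q - 1).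
Proof. intro Hq. assert (HQ: 1 <= INR q) by (apply (le_INR 1); auto).
 unfold gq. rewrite S_INR. set (Q := INR q) in *.
 assert (A: 0 < sqrt (2*Q-1)) by (apply sqrt_lt_R0; lra).
 assert (B: sqrt (2*Q-1) <= sqrt (2*(Q+1)-1)) by (apply sqrt_le_1_alt; lra).
 assert (C: (Q + 1 - 1) / sqrt (2 * (Q + 1) - 1) <= Q / sqrt (2*Q-1)).
 { replace (Q+1-1) with Q by ring. unfold Rdiv. apply Rmult_le_compat_l; [lra|].
   apply Rinv_le_contravar; auto. }
 assert (D: Q / sqrt (2*Q-1) - (Q-1)/sqrt(2*Q-1) = 1 / sqrt (2*Q-1)) by (field; lra).
 lra. Qed.

Lemma gq_unbounded L q0 : exists q, (q0 <= q)%nat /\ (1 <= q)%nat /\ L <= gq q.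
Proof. destruct (INR_unbounded (2*L*L + 2 + INR q0)) as [n Hn].
 assert (Hq0: 0 <= INR q0) by apply pos_INR.
 assert (H1: (q0 <= n)%nat). { apply INR_le. nra. }
 assert (H2: (1 <= n)%nat). { apply (INR_le 1). simpl. nra. }
 exists n. split; auto. split; auto. unfold gq. pose proof (le_INR _ _ H2) as HQ. simpl in HQ. set (Q := INR n) in *.
 assert (A: 0 < sqrt (2*Q-1)) by (apply sqrt_lt_R0; lra).
 apply (Rmult_le_reg_r (sqrt (2*Q-1))); auto.
 replace ((Q - 1) / sqrt (2*Q-1) * sqrt (2*Q-1)) with (Q - 1) by (field; lra).
 destruct (Rle_dec L 0). { pose proof (Rmult_le_compat_r _ _ _ (Rlt_le _ _ A) r). lra. }
 rewrite <- (sqrt_square (Q-1)) by lra. rewrite <- (sqrt_square L) at 1 by lra.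
 rewrite <- sqrt_mult by nra. apply sqrt_le_1_alt. nra. Qed.

Lemma disc_ivt (g : nat -> R) L q0 Q : (q0 <= Q)%nat -> g q0 < L -> L <= g Q ->
  exists q, (q0 <= q)%nat /\ g q < L /\ L <= g (S q).
Proof. intros HQ H0 H1. induction Q.
 - inversion HQ; subst; lra.
 - destruct (Rlt_le_dec (g Q) L).
   + exists Q. split; [|split]; auto. inversion HQ; subst; [lra|auto].
   + apply IHQ; auto. inversion HQ; subst; [lra|auto]. Qed.

Lemma key_bound w f e : 1/2 < w -> w <= f -> f <= 1 -> 1/2 < f*f -> f - w < e ->
  0 <= 1/(w*w) - 1/(f*f) < 16 * e.
Proof. intros H1 H2 H3 H4 H5.
 assert (E: 1/(w*w) - 1/(f*f) = (f-w)*(f+w) / (w*w*(f*f))) by (field; lra).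
 rewrite E. assert (D: 1/8 <= w*w*(f*f)) by nra.
 split. apply Rmult_le_pos. nra. apply Rlt_le, Rinv_0_lt_compat; nra.
 apply (Rmult_lt_reg_r (w*w*(f*f))). nra.
 unfold Rdiv. rewrite Rmult_assoc, Rinv_l by nra. nra. Qed.

Lemma cdense c d : 0 < d -> exists a b, orb (1,0) (a,b) /\ a <> 0 /\ Rabs (b / sig2 a - c) < d.
Proof. intro Hd.
 destruct (archimed c) as [U1 U2].
 set (i := (up c - 2)%Z).
 set (r := c - IZR i).
 assert (Hr: 1 <= r < 2) by (unfold r, i; rewrite minus_IZR; simpl; lra).
 set (f := 1 / sqrt r).
 assert (Hsr: 1 <= sqrt r) by (rewrite <- sqrt_1; apply sqrt_le_1_alt; lra).
 assert (Hsr2: sqrt r * sqrt r = r) by (apply sqrt_sqrt; lra).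
 assert (Hff: f * f = 1 / r).
 { replace (1/r) with (1/(sqrt r * sqrt r)) by (rewrite Hsr2; reflexivity). unfold f; field; lra. }
 assert (Hf1: f <= 1). { unfold f. apply (Rmult_le_reg_r (sqrt r)); [lra|]. field_simplify; lra. }
 assert (Hf0: 0 < f) by (unfold f; apply Rdiv_lt_0_compat; lra).
 assert (Hff2: 1/2 < f * f). { rewrite Hff. apply (Rmult_lt_reg_r r); [lra|]. field_simplify; lra. }
 set (e := Rmin (1/5) (d/20)).
 assert (He: 0 < e) by (apply Rmin_glb_lt; lra).
 assert (He1: e <= 1/5) by apply Rmin_l.
 assert (He2: e <= d/20) by apply Rmin_r.
 destruct (INR_unbounded (1/(e*e) + 1)) as [q0 Hq0].
 assert (Hee: 0 < 1/(e*e)) by (apply Rdiv_lt_0_compat; nra).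
 assert (Hq01: (1 <= q0)%nat) by (apply (INR_le 1); simpl; lra).
 assert (Hstep: forall q, (q0 <= q)%nat -> 1 / sqrt (2 * INR q - 1) < e).
 { intros q Hq. apply le_INR in Hq.
   assert (A: 1/e < sqrt (2 * INR q - 1)).
   { rewrite <- (sqrt_square (1/e)) by (apply Rlt_le, Rdiv_lt_0_compat; lra).
     apply sqrt_lt_1_alt. split. apply Rmult_le_pos; apply Rlt_le, Rdiv_lt_0_compat; lra.
     replace (1/e * (1/e)) with (1/(e*e)) by (field; lra). lra. }
   assert (A0: 0 < 1/e) by (apply Rdiv_lt_0_compat; lra).
   apply (Rmult_lt_reg_r (sqrt (2 * INR q - 1))); [lra|].
   replace (1 / sqrt (2 * INR q - 1) * sqrt (2 * INR q - 1)) with 1 by (field; lra).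
   replace 1 with (e * (1/e)) at 1 by (field; lra). apply Rmult_lt_compat_l; lra. }
 destruct (archimed (gq q0 + f)) as [M1 M2].
 set (m := up (gq q0 + f)).
 set (L := IZR m - f).
 destruct (gq_unbounded L q0) as [Q1 [HQ1 [HQ1' HQ1g]]].
 destruct (disc_ivt gq L q0 Q1 HQ1 ltac:(unfold L, m; lra) HQ1g) as [q [Hq [G1 G2]]].
 pose proof (gq_incr q ltac:(lia)). pose proof (Hstep q Hq).
 set (q' := S q).
 set (Q := INR q').
 assert (HQ: 2 <= Q). { unfold Q, q'. rewrite S_INR. pose proof (le_INR 1 q ltac:(lia)). simpl in *; lra. }
 set (s := sqrt (2*Q - 1)).
 assert (Hs: 0 < s) by (apply sqrt_lt_R0; lra).
 assert (Hss: s * s = 2*Q-1) by (apply sqrt_sqrt; lra).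
 set (w := IZR m - gq q').
 assert (Hw1: f - e < w) by (unfold w, q'; unfold L in *; lra).
 assert (Hw2: w <= f) by (unfold w, q'; unfold L in *; lra).
 assert (Hgq: gq q' * s = Q - 1).
 { unfold gq. change (INR q') with Q. change (sqrt (2*Q-1)) with s. field. lra. }
 set (x := 1 - Q + IZR m * s).
 assert (Hx: x = s * w) by (unfold x, w; nra).
 assert (Hw0: 1/2 < w) by nra.
 exists x, (2 * Q - 1 + IZR i * sig2 x). split; [|split].
 - apply (orb_family q' m i ltac:(lia)).
 - rewrite Hx. nra.
 - rewrite sig2_pos by nra. rewrite Hx.
   replace ((2 * Q - 1 + IZR i * (s * w * (s * w))) / (s * w * (s * w)) - c) with (1/(w*w) - 1/(f*f)).
   2:{ rewrite Hff. replace c with (r + IZR i) by (unfold r; ring). rewrite <- Hss. field. repeat split; lra. }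
   destruct (key_bound w f e) as [K1 K2]; auto; try lra.
   rewrite Rabs_right; lra. Qed.
Lemma dist2_le s q : dist2 s q <= Rabs (fst s - fst q) + Rabs (snd s - snd q).
Proof. unfold dist2. set (a := fst s - fst q). set (b := snd s - snd q).
 pose proof (Rabs_pos a). pose proof (Rabs_pos b).
 rewrite <- (sqrt_square (Rabs a + Rabs b)) by lra. apply sqrt_le_1_alt.
 assert (a^2 = Rabs a * Rabs a) by (rewrite <- Rabs_mult; simpl; rewrite Rmult_1_r; symmetry; apply Rabs_right; nra).
 assert (b^2 = Rabs b * Rabs b) by (rewrite <- Rabs_mult; simpl; rewrite Rmult_1_r; symmetry; apply Rabs_right; nra).
 nra. Qed.

Lemma dense_main p : p <> (0,0) -> dense2 (orb p).
Proof. intros Hp [X Y] eps He.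
 set (X' := if Req_dec_T X 0 then eps/8 else X).
 assert (HX1: X' <> 0 /\ Rabs (X' - X) < eps/4).
 { unfold X'. destruct (Req_dec_T X 0). subst. split. lra. rewrite Rminus_0_r, Rabs_right; lra.
   split; auto. unfold Rminus; rewrite Rplus_opp_r, Rabs_R0; lra. }
 destruct HX1 as [HX0 HX1].
 set (sX := sig2 X').
 assert (HsX: sX <> 0) by (intro E; apply HX0, sig2_zero; auto).
 set (cs := Y / sX).
 set (dl := eps / (4 * (Rabs sX + 1))).
 assert (Hdl: 0 < dl) by (unfold dl; apply Rdiv_lt_0_compat; [lra| pose proof (Rabs_pos sX); lra]).
 destruct (cdense cs dl Hdl) as [a [b [Hab [Ha Hc]]]].
 destruct Hab as [g [Hg Eg]].
 set (t := X' / a).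
 assert (Ht: t * a = X') by (unfold t; field; auto).
 assert (Hgt: g (t, 0) = (X', sig2 t * b)).
 { replace (t, 0) with (Msc t (1,0)) by (unfold Msc; simpl; f_equal; ring).
   rewrite (Gamma_Msc g Hg), <- Eg. unfold Msc; simpl. rewrite Ht; reflexivity. }
 assert (Hsa: sig2 a <> 0) by (intro E; apply Ha, sig2_zero; auto).
 assert (Hy: Rabs (sig2 t * b - Y) < eps/4).
 { assert (E1: sX = sig2 t * sig2 a) by (unfold sX; rewrite <- Ht, sig2_mul; auto).
   replace (sig2 t * b - Y) with (sX * (b / sig2 a - cs)).
   2:{ unfold cs. rewrite E1. field. split; auto. intro E; apply HsX. rewrite E1, E; ring. }
   rewrite Rabs_mult. pose proof (Rabs_pos sX). pose proof (Rabs_pos (b / sig2 a - cs)).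
   assert (Rabs sX * Rabs (b / sig2 a - cs) <= Rabs sX * dl) by (apply Rmult_le_compat_l; lra).
   assert (Rabs sX * dl < eps/4). { unfold dl.
     apply (Rmult_lt_reg_r (4 * (Rabs sX + 1))). lra.
     replace (Rabs sX * (eps / (4 * (Rabs sX + 1))) * (4 * (Rabs sX + 1))) with (Rabs sX * eps) by (field; lra).
     nra. }
   lra. }
 destruct (cts_Gamma g Hg (t,0) (eps/4) ltac:(lra)) as [eta [Heta Hct]].
 set (mm := Rmin eta 1).
 assert (Hmm: 0 < mm) by (apply Rmin_glb_lt; lra).
 assert (Hmm1: mm <= eta) by apply Rmin_l. assert (Hmm2: mm <= 1) by apply Rmin_r.
 destruct (small_all p (mm * mm) Hp ltac:(nra)) as [[a1 b1] [Hz [Z1 Z2]]]. simpl in Z1, Z2.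
 set (s1 := sig2_inv b1).
 assert (Hb1: b1 <> 0) by (intro E; rewrite E, Rabs_R0 in Z1; lra).
 assert (Hs1: s1 <> 0) by (intro E; apply Hb1, sig2_inv_zero; auto).
 assert (Hs1a: Rabs s1 < mm).
 { assert (Rabs s1 * Rabs s1 = Rabs b1) by (rewrite <- Rabs_mult; unfold s1; rewrite sig2_inv_abs; apply Rabs_Rabsolu).
   pose proof (Rabs_pos s1). nra. }
 destruct (net a1 s1 t Hs1) as [m Hm].
 assert (Hz2: orb p (a1 + IZR m * s1, b1)) by apply (orb_hpow p (a1,b1) m Hz).
 destruct (Hct (a1 + IZR m * s1, b1)) as [C1 C2]; simpl.
 - lra.
 - rewrite Rminus_0_r. nra.
 - exists (g (a1 + IZR m * s1, b1)). split.
   + apply orb_G; auto.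
   + rewrite Hgt in C1, C2. simpl in C1, C2.
     eapply Rle_lt_trans; [apply dist2_le|]. simpl.
     assert (Rabs (fst (g (a1 + IZR m * s1, b1)) - X) < eps/2).
     { replace (fst (g (a1 + IZR m * s1, b1)) - X) with ((fst (g (a1 + IZR m * s1, b1)) - X') + (X' - X)) by ring.
       eapply Rle_lt_trans; [apply Rabs_triang|]. lra. }
     assert (Rabs (snd (g (a1 + IZR m * s1, b1)) - Y) < eps/2).
     { replace (snd (g (a1 + IZR m * s1, b1)) - Y) with ((snd (g (a1 + IZR m * s1, b1)) - sig2 t * b) + (sig2 t * b - Y)) by ring.
       eapply Rle_lt_trans; [apply Rabs_triang|]. lra. }
     lra. Qed.
Notation EE := (Euclid sig2 sig2_inv).

Lemma E_10 : EE (1,0) = (1,0).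
Proof. unfold Euclid; simpl. rewrite sig2_1. destruct (Rlt_dec 0 1); [|lra].
 rewrite sig2_inv_0. f_equal; ring. Qed.

Lemma iter_fix p n : EE p = p -> Nat.iter n EE p = p.
Proof. intro H. induction n; simpl; auto. rewrite IHn; auto. Qed.

Lemma quad_E p : nonneg_quadrant p -> nonneg_quadrant (EE p).
Proof. destruct p as [x y]; unfold nonneg_quadrant, Euclid; simpl; intros [Hx Hy].
 rewrite sig2_pos by lra. destruct (Rlt_dec y (x*x)); simpl.
 - rewrite sig2_inv_pos by lra. split; auto. rewrite <- (sqrt_square x) at 1 by lra.
   assert (sqrt y <= sqrt (x*x)) by (apply sqrt_le_1_alt; lra). lra.
 - lra. Qed.

Lemma inv_I k : forall p, nonneg_quadrant p -> Nat.iter k EE p = (1,0) ->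
  1 <= fst p /\ (snd p = 0 \/ 1 <= snd p).
Proof. induction k; intros p Hq Hi.
 - simpl in Hi. subst; simpl. lra.
 - rewrite Nat.iter_succ_r in Hi. destruct (IHk (EE p) (quad_E p Hq) Hi) as [A B].
   destruct p as [x y]; unfold nonneg_quadrant in Hq; simpl in *. unfold Euclid in A, B; simpl in A, B.
   rewrite sig2_pos in A, B by lra. destruct (Rlt_dec y (x*x)); simpl in A, B.
   + rewrite sig2_inv_pos in A by lra. pose proof (sqrt_pos y). split; [lra|auto].
   + split; auto. right. nra. Qed.

Definition inS p := nonneg_quadrant p /\ exists k, Nat.iter k EE p = (1,0).

Lemma bs_inS p : backward_set sig2 sig2_inv p -> inS p.
Proof. intros [n [k [Hq Hi]]]. split; auto. exists k. rewrite Hi. apply iter_fix, E_10. Qed.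

Definition Aop (q : pt) : pt := (fst q + sqrt (snd q), snd q).
Definition Bop (q : pt) : pt := (fst q, snd q + fst q * fst q).

Lemma E_cases p : nonneg_quadrant p -> p = Aop (EE p) \/ p = Bop (EE p).
Proof. destruct p as [x y]; unfold nonneg_quadrant, Euclid, Aop, Bop; simpl; intros [Hx Hy].
 rewrite sig2_pos by lra. destruct (Rlt_dec y (x*x)); simpl.
 - left. rewrite sig2_inv_pos by lra. f_equal; ring.
 - right. f_equal; ring. Qed.

Lemma descent p : inS p -> p <> (1,0) -> inS (EE p) /\ fst (EE p) + snd (EE p) <= fst p + snd p - 1.
Proof. intros [Hq [k Hk]] Hne.
 destruct k as [|k]. { simpl in Hk. contradiction. }
 rewrite Nat.iter_succ_r in Hk. split. split. apply quad_E; auto. exists k; auto.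
 destruct (inv_I (S k) p Hq ltac:(rewrite Nat.iter_succ_r; auto)) as [I1 I2].
 destruct p as [x y]; unfold nonneg_quadrant in Hq; simpl in *.
 destruct I2 as [I2|I2].
 - subst y. exfalso. apply Hne. assert (EE (x,0) = (x,0)).
   { unfold Euclid; simpl. rewrite sig2_pos by lra. destruct (Rlt_dec 0 (x*x)); [|nra].
     rewrite sig2_inv_0. f_equal; ring. }
   rewrite H in Hk. rewrite iter_fix in Hk; auto.
 - unfold Euclid; simpl. rewrite sig2_pos by lra. destruct (Rlt_dec y (x*x)); simpl.
   + rewrite sig2_inv_pos by lra. assert (1 <= sqrt y) by (rewrite <- sqrt_1; apply sqrt_le_1_alt; lra). lra.
   + nra. Qed.

Lemma finite_S n : exists L, forall p, inS p -> fst p + snd p <= INR n -> In p L.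
Proof. induction n as [|n [L HL]].
 - exists nil. intros p Hp Hs. destruct Hp as [Hq [k Hk]].
   destruct (inv_I k p Hq Hk). unfold nonneg_quadrant in Hq. simpl in Hs. lra.
 - exists ((1,0) :: flat_map (fun q => Aop q :: Bop q :: nil) L).
   intros p Hp Hs. destruct (classic (p = (1,0))) as [E|E]. left; auto. right.
   destruct (descent p Hp E) as [D1 D2]. rewrite S_INR in Hs.
   assert (In (EE p) L) by (apply HL; auto; lra).
   apply in_flat_map. exists (EE p). split; auto.
   destruct (E_cases p (proj1 Hp)) as [X|X]; rewrite <- X; simpl; auto. Qed.

Lemma dist2_pos p q : p <> q -> 0 < dist2 p q.
Proof. intro H. unfold dist2. apply sqrt_lt_R0.
 destruct (Req_dec (fst p) (fst q)); destruct (Req_dec (snd p) (snd q)).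
 - exfalso. apply H. destruct p, q; simpl in *; subst; auto.
 - assert (0 < (snd p - snd q)^2) by (simpl; assert (snd p - snd q <> 0) by lra; nra). nra.
 - assert (0 < (fst p - fst q)^2) by (simpl; assert (fst p - fst q <> 0) by lra; nra). nra.
 - assert (0 < (fst p - fst q)^2) by (simpl; assert (fst p - fst q <> 0) by lra; nra). nra. Qed.

Lemma sep L p : exists e, 0 < e /\ forall q, In q L -> q <> p -> e <= dist2 p q.
Proof. induction L as [|a L [e [He H]]].
 - exists 1. split. lra. intros q [].
 - destruct (classic (a = p)) as [E|E].
   + exists e. split; auto. intros q [Q|Q] Hne; [subst; contradiction|auto].
   + exists (Rmin e (dist2 p a)). split. apply Rmin_glb_lt; auto. apply dist2_pos; auto.
     intros q [Q|Q] Hne. subst. apply Rmin_r. eapply Rle_trans. apply Rmin_l. auto. Qed.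

Lemma dist2_ge p q : Rabs (fst p - fst q) <= dist2 p q /\ Rabs (snd p - snd q) <= dist2 p q.
Proof. unfold dist2. split.
 - rewrite <- sqrt_Rsqr_abs. apply sqrt_le_1_alt. pose proof (Rle_0_sqr (snd p - snd q)). unfold Rsqr in *. simpl. rewrite !Rmult_1_r. lra.
 - rewrite <- sqrt_Rsqr_abs. apply sqrt_le_1_alt. pose proof (Rle_0_sqr (fst p - fst q)). unfold Rsqr in *. simpl. rewrite !Rmult_1_r. lra. Qed.

Lemma discrete_main : discrete2 (backward_set sig2 sig2_inv).
Proof. intros p Hp. pose proof (bs_inS p Hp) as Sp.
 destruct (INR_unbounded (fst p + snd p + 2)) as [n Hn].
 destruct (finite_S n) as [L HL]. destruct (sep L p) as [e [He H]].
 exists (Rmin e 1). split. apply Rmin_glb_lt; lra.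
 intros q Hq Hd. pose proof (bs_inS q Hq) as Sq.
 destruct (dist2_ge p q) as [D1 D2].
 pose proof (Rmin_l e 1). pose proof (Rmin_r e 1).
 assert (In q L). { apply HL; auto. apply Rabs_def2 in D1 || idtac.
   assert (Rabs (fst p - fst q) < 1) by lra. assert (Rabs (snd p - snd q) < 1) by lra.
   apply Rabs_def2 in H2. apply Rabs_def2 in H3. lra. }
 destruct (classic (q = p)) as [E|E]; auto. specialize (H q H2 E). lra. Qed.

Theorem theorem2 :
  (forall p : pt, p <> (0, 0) -> dense2 (orbit sig2 sig2_inv p)) /\
  (forall p, backward_set sig2 sig2_inv p -> nonneg_quadrant p) /\
  discrete2 (backward_set sig2 sig2_inv).
Proof. split; [|split].
 - apply dense_main.
 - intros p [n [k [Hq _]]]; auto.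
 - apply discrete_main. Qed.
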